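(* Let $r_o>0$, $\tau>0$, $\kappa>0$, $\alpha>0$ and $\beta\in(0,1)$ be constants. For $m<0$, let $u_m:[0,\infty)\to[r_o,\infty)$ be the solution of $$u_m(0)=r_o,\qquad u_m'(s)=\left(1-\frac{2m}{u_m(s)}+\kappa^2u_m^2(s)\right)^{1/2},$$ and set $$k=\tau\left(1-\frac{2m}{r_o}+\kappa^2r_o^2\right)^{-1/2}.$$ (i) For every $m<0$ with $k^2<\beta$, there exists a positive constant $A_o$ such that $$(\beta-k^2)+\left[3\kappa^2(1-k^2)-\tfrac12\alpha A_o^{-2}\right]u_m^2(A_ok)=0.$$ (ii) The set of all such $A_o$ is bounded from above and bounded away from zero as $m\to-\infty$. *)

(* Defs.v *)
From Stdlib Require Import Reals.
Open Scope R_scope.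

Definition ode_rhs (kappa m x : R) : R :=
  sqrt (1 - 2 * m / x + kappa ^ 2 * x ^ 2).

Definition is_um (ro kappa m : R) (v : R -> R) : Prop :=
  v 0 = ro /\
  (forall s, 0 <= s -> ro <= v s) /\
  (forall s, 0 < s -> derivable_pt_lim v s (ode_rhs kappa m (v s))) /\
  (forall eps, 0 < eps -> exists delta, 0 < delta /\
     forall s, 0 <= s < delta -> Rabs (v s - ro) < eps).

Definition kcoef (ro tau kappa m : R) : R :=
  tau / sqrt (1 - 2 * m / ro + kappa ^ 2 * ro ^ 2).

Definition Ao_eq (ro tau kappa alpha beta m : R) (v : R -> R) (A : R) : Prop :=
  let k := kcoef ro tau kappa m in
  (beta - k ^ 2) + (3 * kappa ^ 2 * (1 - k ^ 2) - / 2 * alpha / A ^ 2) * (v (A * k)) ^ 2 = 0.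

(* Main.v *)
From Stdlib Require Import Reals Ranalysis5 Lra Psatz.
Open Scope R_scope.
Require Import Defs.
Lemma cont_f (v : R -> R) (c d e k x : R) :
  0 < x -> 0 < k -> (forall s, 0 < s -> derivable_pt v s) ->
  continuity_pt (fun y => c + (d - / 2 * e / y ^ 2) * (v (y * k)) ^ 2) x.
Proof.
  intros Hx Hk Hd.
  pose (g :=  comp v (id * fct_cte k)%F).
  apply continuity_pt_locally_ext with (a := 1)
    (f := (fct_cte c + (fct_cte d - fct_cte (/2*e) * / (id*id)) * (g*g))%F); [lra| |].
  - intros y _. unfold g, plus_fct, minus_fct, mult_fct, inv_fct, fct_cte, comp, id.
    unfold Rdiv. simpl. rewrite !Rmult_1_r. ring.
  - assert (Hg : continuity_pt g x).
    { unfold g. apply continuity_pt_comp.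
      + apply continuity_pt_mult; [apply derivable_continuous_pt, derivable_pt_id|apply continuity_pt_const; unfold constant; auto].
      + apply derivable_continuous_pt, Hd. unfold mult_fct, fct_cte, id. nra. }
    apply continuity_pt_plus; [apply continuity_pt_const; unfold constant; auto|].
    apply continuity_pt_mult; [|apply continuity_pt_mult; assumption].
    apply continuity_pt_minus; [apply continuity_pt_const; unfold constant; auto|].
    apply continuity_pt_mult; [apply continuity_pt_const; unfold constant; auto|].
    apply continuity_pt_inv.
    + apply continuity_pt_mult; apply derivable_continuous_pt, derivable_pt_id.
    + unfold mult_fct, id. nra.
Qed.
Lemma bnds (ro kappa alpha beta K U A : R) :
  0 < ro -> 0 < kappa -> 0 < alpha -> 0 < beta < 1 -> 0 <= K < beta -> ro^2 <= U -> 0 < A ->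
  (beta - K) + (3 * kappa ^ 2 * (1 - K) - / 2 * alpha / A ^ 2) * U = 0 ->
  Rmin 1 (alpha * ro^2 / (2 * (beta + 3 * kappa^2 * ro^2))) <= A <= 1 + alpha / (6 * kappa^2 * (1 - beta)).
Proof.
  intros Hr Hk Ha Hb HK HU HA E.
  assert (HA2 : 0 < A^2) by nra.
  assert (E2 : (beta - K) * A^2 + 3 * kappa ^ 2 * (1 - K) * U * A^2 = / 2 * alpha * U).
  { replace (/ 2 * alpha * U) with ((/ 2 * alpha / A ^ 2) * U * A^2) by (field; lra). nra. }
  assert (HU0 : 0 < U) by nra.
  assert (Hk2 : 0 < kappa^2) by nra.
  split.
  - destruct (Rle_lt_dec 1 A) as [H1|H1].
    + apply Rle_trans with 1; [apply Rmin_l|lra].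
    + apply Rle_trans with (alpha * ro^2 / (2 * (beta + 3 * kappa^2 * ro^2))); [apply Rmin_r|].
      assert (HD : 0 < 2 * (beta + 3 * kappa^2 * ro^2)) by nra.
      apply Rmult_le_reg_r with (2 * (beta + 3 * kappa^2 * ro^2)); [lra|].
      unfold Rdiv. rewrite Rmult_assoc, Rinv_l, Rmult_1_r by lra.
      assert (A^2 <= A) by nra.
      assert ((beta - K) * A^2 <= beta * A) by nra.
      assert (3 * kappa ^ 2 * (1 - K) * U * A^2 <= 3 * kappa ^ 2 * U * A).
      { assert (0 <= 3 * kappa^2 * U) by nra.
        assert ((1-K) * A^2 <= A) by nra. nra. }
      assert (Hx : alpha * U <= 2 * A * beta + 6 * kappa^2 * U * A) by lra.
      destruct (Rle_lt_dec alpha (6*kappa^2*A)) as [G2|G2].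
      * nra.
      * assert (ro^2 * (alpha - 6*kappa^2*A) <= U * (alpha - 6*kappa^2*A)) by nra.
        nra.
  - destruct (Rle_lt_dec A 1) as [H1|H1].
    + assert (0 < alpha / (6 * kappa^2 * (1 - beta))). { apply Rdiv_lt_0_compat; nra. } lra.
    + assert (HD : 0 < 6 * kappa^2 * (1 - beta)) by nra.
      assert (Hx : 6 * kappa^2 * (1-beta) * A^2 < alpha).
      { assert (3 * kappa ^ 2 * (1 - beta) * U * A^2 <= 3 * kappa ^ 2 * (1 - K) * U * A^2).
        { apply Rmult_le_compat_r; [lra|]. apply Rmult_le_compat_r; [lra|]. nra. }
        assert (0 < (beta - K) * A^2) by nra.
        assert (3 * kappa ^ 2 * (1 - beta) * U * A^2 < / 2 * alpha * U) by lra.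
        apply Rmult_lt_reg_r with (/2 * U); [nra|]. nra. }
      assert (A <= alpha / (6 * kappa^2 * (1 - beta))).
      { apply Rmult_le_reg_r with (6 * kappa^2 * (1 - beta)); [lra|].
        replace (alpha / (6 * kappa ^ 2 * (1 - beta)) * (6 * kappa ^ 2 * (1 - beta))) with alpha by (field; lra). nra. }
      lra.
Qed.

Theorem lemma4p1 (ro tau kappa alpha beta : R) (u : R -> R -> R) :
  0 < ro -> 0 < tau -> 0 < kappa -> 0 < alpha -> 0 < beta < 1 ->
  (forall m, m < 0 -> is_um ro kappa m (u m)) ->
  (* (i) *)
  (forall m, m < 0 -> (kcoef ro tau kappa m) ^ 2 < beta ->
     exists Ao, 0 < Ao /\ Ao_eq ro tau kappa alpha beta m (u m) Ao) /\
  (* (ii) *)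
  (exists M0 C1 C2, 0 < C1 /\
     forall m, m < M0 -> m < 0 -> (kcoef ro tau kappa m) ^ 2 < beta ->
       forall Ao, 0 < Ao -> Ao_eq ro tau kappa alpha beta m (u m) Ao ->
         C1 <= Ao <= C2).
Proof.
  intros Hr Ht Hk Ha Hb Hu.
  assert (Hkp : forall m, m < 0 -> 0 < kcoef ro tau kappa m).
  { intros m Hm. unfold kcoef. apply Rdiv_lt_0_compat; [lra|].
    apply sqrt_lt_R0.
    assert (0 < - 2 * m / ro). { apply Rdiv_lt_0_compat; lra. }
    assert (0 <= kappa^2 * ro^2) by (apply Rmult_le_pos; apply pow2_ge_0).
    unfold Rdiv in *. lra. }
  assert (HU : forall m A, m < 0 -> 0 < A -> ro^2 <= (u m (A * kcoef ro tau kappa m))^2).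
  { intros m A Hm HA. destruct (Hu m Hm) as [_ [Hge _]].
    assert (ro <= u m (A * kcoef ro tau kappa m)).
    { apply Hge. specialize (Hkp m Hm). nra. }
    nra. }
  split.
  - intros m Hm Hkb.
    pose (k := kcoef ro tau kappa m).
    assert (Hk0 : 0 < k) by (apply Hkp; exact Hm).
    assert (HK : 0 < k^2 < beta) by (split; [nra|exact Hkb]).
    pose (f := fun y => (beta - k^2) + (3 * kappa^2 * (1 - k^2) - / 2 * alpha / y ^ 2) * (u m (y * k)) ^ 2).
    pose (Q := 3 * kappa^2 + (beta + 1) / ro^2).
    assert (HQ : 0 < Q).
    { unfold Q. assert (0 < (beta + 1) / ro^2) by (apply Rdiv_lt_0_compat; nra). nra. }
    pose (E := alpha / (2 * Q)).
    assert (HE : 0 < E) by (apply Rdiv_lt_0_compat; lra).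
    pose (a := Rmin 1 E).
    assert (Ha0 : 0 < a) by (unfold a; apply Rmin_pos; lra).
    assert (Ha1 : a <= 1) by apply Rmin_l.
    assert (HaE : a <= E) by apply Rmin_r.
    pose (b := 1 + alpha / (3 * kappa^2 * (1 - k^2))).
    assert (Hk2 : 0 < kappa^2) by nra.
    assert (HD : 0 < 3 * kappa^2 * (1 - k^2)) by nra.
    assert (Hb1 : 1 < b).
    { unfold b. assert (0 < alpha / (3 * kappa^2 * (1 - k^2))) by (apply Rdiv_lt_0_compat; lra). lra. }
    assert (Hfa : f a < 0).
    { unfold f. pose proof (HU m a Hm Ha0) as HUa. fold k in HUa.
      set (U := u m (a * k) ^ 2) in *.
      assert (Hw : Q <= / 2 * alpha / a ^ 2).
      { apply Rmult_le_reg_r with (a^2); [nra|].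
        replace (/ 2 * alpha / a ^ 2 * a ^ 2) with (Q * E) by (unfold E; field; split; lra).
        apply Rmult_le_compat_l; [lra|]. nra. }
      assert (HB : 3 * kappa ^ 2 * (1 - k ^ 2) - / 2 * alpha / a ^ 2 <= - ((beta + 1) / ro^2)).
      { unfold Q in Hw. nra. }
      assert (Hro : (beta + 1) / ro^2 * ro^2 = beta + 1) by (field; lra).
      assert (0 < (beta + 1) / ro^2) by (apply Rdiv_lt_0_compat; nra).
      nra. }
    assert (Hfb : 0 < f b).
    { unfold f. pose proof (HU m b Hm ltac:(lra)) as HUb. fold k in HUb.
      set (U := u m (b * k) ^ 2) in *.
      assert (Hw : / 2 * alpha / b ^ 2 < 3 * kappa ^ 2 * (1 - k ^ 2)).
      { apply Rmult_lt_reg_r with (b^2); [nra|].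
        replace (/ 2 * alpha / b ^ 2 * b ^ 2) with (/2 * alpha) by (field; lra).
        assert (alpha < 3 * kappa ^ 2 * (1 - k ^ 2) * b).
        { unfold b. rewrite Rmult_plus_distr_l.
          replace (3 * kappa ^ 2 * (1 - k ^ 2) * (alpha / (3 * kappa ^ 2 * (1 - k ^ 2)))) with alpha by (field; lra).
          lra. }
        nra. }
      nra. }
    assert (Hab : a < b) by lra.
    destruct (IVT_interv f a b) as [z [Hz Hfz]]; try assumption.
    + intros y Hy. unfold f. apply cont_f; try lra.
      intros s Hs. destruct (Hu m Hm) as [_ [_ [Hd _]]].
      exists (ode_rhs kappa m (u m s)). apply Hd; exact Hs.
    + exists z. split; [lra|]. unfold Ao_eq. exact Hfz.
  - exists 0, (Rmin 1 (alpha * ro^2 / (2 * (beta + 3 * kappa^2 * ro^2)))),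
      (1 + alpha / (6 * kappa^2 * (1 - beta))).
    split.
    + apply Rmin_pos; [lra|]. apply Rdiv_lt_0_compat; [apply Rmult_lt_0_compat; [lra|apply pow_lt; lra]|].
      assert (0 <= kappa^2 * ro^2) by (apply Rmult_le_pos; apply pow2_ge_0). lra.
    + intros m _ Hm Hkb A HA HE. unfold Ao_eq in HE.
      apply (bnds ro kappa alpha beta (kcoef ro tau kappa m ^ 2) (u m (A * kcoef ro tau kappa m) ^ 2) A); try assumption.
      * split; [apply pow2_ge_0|exact Hkb].
      * apply HU; assumption.
Qed.
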